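(* Let $E$ be a topological space such that (i) $E$ has a countable basis of open sets, and (ii) for every closed subset $F$ of $E$, the intersection of countably many $\mathbf{\Pi}^0_2(E)$ subsets of $F$ each of which is dense in $F$ is dense in $F$. Then $\bigcup_{\alpha<\aleph_1}\mathbf{D}_\alpha(E)=\mathbf{\Delta}^0_2(E)$.
   Context: $\mathbf{\Sigma}^0_2(E)$: countable unions of sets $U\setminus V$ with $U,V$ open in $E$; $\mathbf{\Pi}^0_2(E)$: complements of $\mathbf{\Sigma}^0_2(E)$ sets; $\mathbf{\Delta}^0_2(E)=\mathbf{\Sigma}^0_2(E)\cap\mathbf{\Pi}^0_2(E)$. Parity of ordinals: every ordinal is uniquely $\lambda+n$ with $\lambda$ zero or limit and $n<\omega$; its parity is that of $n$; $\alpha\sim\beta$ means same parity. For an ordinal $\alpha$ and a sequence $(A_\beta)_{\beta<\alpha}$ of subsets of $E$, $D_\alpha((A_\beta)_{\beta<\alpha})=\bigcup_{\beta<\alpha,\ \beta\not\sim\alpha}\big(A_\beta\setminus\bigcup_{\gamma<\beta}A_\gamma\big)$. $\mathbf{D}_\alpha(E)$ is the class of all sets $D_\alpha((A_\beta)_{\beta<\alpha})$ with every $A_\beta$ open in $E$. $\aleph_1$ denotes the first uncountable ordinal. *)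

(* Defs.v *)
From Stdlib Require Import Classical.

Set Implicit Arguments.

Definition set (E : Type) := E -> Prop.

Record topology (E : Type) := Topology {
  is_open : set E -> Prop;
  open_full : is_open (fun _ => True);
  open_inter : forall U V, is_open U -> is_open V -> is_open (fun x => U x /\ V x);
  open_union : forall (F : set E -> Prop), (forall U, F U -> is_open U) ->
                 is_open (fun x => exists U, F U /\ U x)
}.

Section Topo.
Variables (E : Type) (T : topology E).

Definition is_closed (F : set E) : Prop := is_open T (fun x => ~ F x).

Definition second_countable : Prop :=
  exists B : nat -> set E,
    (forall n, is_open T (B n)) /\
    (forall U, is_open T U -> forall x, U x ->
       exists n, B n x /\ (forall y, B n y -> U y)).

Definition Sigma02 (A : set E) : Prop :=
  exists U V : nat -> set E,
    (forall n, is_open T (U n)) /\ (forall n, is_open T (V n)) /\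
    (forall x, A x <-> exists n, U n x /\ ~ V n x).

Definition Pi02 (A : set E) : Prop := Sigma02 (fun x => ~ A x).

Definition Delta02 (A : set E) : Prop := Sigma02 A /\ Pi02 A.

Definition dense_in (F A : set E) : Prop :=
  forall U, is_open T U -> (exists x, F x /\ U x) -> exists x, A x /\ U x.

Definition baire_closed_Pi02 : Prop :=
  forall F : set E, is_closed F ->
  forall A : nat -> set E,
    (forall n, Pi02 (A n)) ->
    (forall n x, A n x -> F x) ->
    (forall n, dense_in F (A n)) ->
    dense_in F (fun x => forall n, A n x).
End Topo.

(** A countable ordinal alpha is represented by an element
    a of a well-ordering R of nat: alpha is the order type of {b | R b a}, and
    the ordinals beta < alpha correspond to the elements b with R b a.
    Every countable ordinal arises this way (take an ordering of nat of
    type alpha + 1 + omega). *)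
Definition well_order (R : nat -> nat -> Prop) : Prop :=
  (forall x, ~ R x x) /\
  (forall x y z, R x y -> R y z -> R x z) /\
  (forall x y, R x y \/ x = y \/ R y x) /\
  well_founded R.

Definition imm_pred (R : nat -> nat -> Prop) (c b : nat) : Prop :=
  R c b /\ ~ (exists d, R c d /\ R d b).

(** parity R b p : p = true iff the ordinal of b, written lambda + n with
    lambda zero or limit, has n odd. *)
Inductive parity (R : nat -> nat -> Prop) : nat -> bool -> Prop :=
| parity_lim : forall b, (forall c, ~ imm_pred R c b) -> parity R b false
| parity_succ : forall b c p, imm_pred R c b -> parity R c p -> parity R b (negb p).

Definition same_parity (R : nat -> nat -> Prop) (b a : nat) : Prop :=
  exists p, parity R b p /\ parity R a p.

Definition Dalpha {E : Type} (R : nat -> nat -> Prop) (a : nat) (A : nat -> set E) : set E :=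
  fun x => exists b, R b a /\ ~ same_parity R b a /\ A b x /\
             (forall c, R c b -> ~ A c x).

Definition in_some_D {E : Type} (T : topology E) (X : set E) : Prop :=
  exists (R : nat -> nat -> Prop) (a : nat) (A : nat -> set E),
    well_order R /\
    (forall b, R b a -> is_open T (A b)) /\
    (forall x, X x <-> Dalpha R a A x).

(* Main.v *)
Require Import Defs.
From Stdlib Require Import Classical FunctionalExtensionality PropExtensionality Lia Arith.

Section Gen.
Variables (E : Type) (T : topology E).

Lemma set_ext (U V : set E) : (forall x, U x <-> V x) -> U = V.
Proof. intros H; apply functional_extensionality; intro x; apply propositional_extensionality; auto. Qed.

Lemma open_ext (U V : set E) : is_open T U -> (forall x, U x <-> V x) -> is_open T V.
Proof. intros HU H; rewrite <- (set_ext _ _ H); exact HU. Qed.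

Lemma open_empty : is_open T (fun _ => False).
Proof. eapply open_ext. apply (open_union T (fun _ => False)). intros; contradiction.
  intros x; split; [intros [U [[] _]] | intros []]. Qed.

Lemma open_cond (P : Prop) (U : set E) : is_open T U -> is_open T (fun x => P /\ U x).
Proof. intros HU. destruct (classic P) as [HP|HP].
 - eapply open_ext; [exact HU|]. intros x; tauto.
 - eapply open_ext; [exact open_empty|]. intros x; tauto. Qed.

Lemma open_or (U V : set E) : is_open T U -> is_open T V -> is_open T (fun x => U x \/ V x).
Proof. intros HU HV. eapply open_ext. apply (open_union T (fun W => W = U \/ W = V)).
 intros W [-> | ->]; auto.
 intros x; split. intros [W [[-> | ->] H]]; auto.
 intros [H|H]. exists U; split; auto. exists V; split; auto. Qed.

Lemma Sigma02_ext (A A' : set E) : Sigma02 T A -> (forall x, A x <-> A' x) -> Sigma02 T A'.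
Proof. intros [U [V [HU [HV H]]]] H'. exists U, V; repeat split; auto; intros.
  apply H, H'; auto. apply H', H; auto. Qed.

Lemma Sigma02_or_open (O A : set E) : is_open T O -> Sigma02 T A -> Sigma02 T (fun x => O x \/ A x).
Proof. intros HO [U [V [HU [HV H]]]].
 exists (fun n => match n with O => O | S k => U k end), (fun n => match n with O => (fun _ => False) | S k => V k end).
 split; [intros [|n]; auto|]. split; [intros [|n]; auto using open_empty|].
 intros x; split.
 - intros [Hx|Hx]. exists 0; auto. apply H in Hx. destruct Hx as [n Hn]. exists (S n); auto.
 - intros [[|n] Hn]. left; tauto. right; apply H; eauto. Qed.
End Gen.
Arguments open_ext {E T U V}.
Arguments open_empty {E T}.
Arguments open_cond {E T} P {U}.
Arguments open_or {E T U V}.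
Arguments Sigma02_ext {E T A A'}.
Arguments Sigma02_or_open {E T O A}.
Arguments set_ext {E U V}.

Lemma wf_min (A : Type) (R : A -> A -> Prop) (P : A -> Prop) : well_founded R -> (exists x, P x) -> exists x, P x /\ forall y, R y x -> ~ P y.
Proof. intros Hwf [x Hx]. revert Hx. induction (Hwf x) as [x _ IH]. intros Hx.
 destruct (classic (exists y, R y x /\ P y)) as [[y [Hy Py]]|Hn].
 - exact (IH y Hy Py).
 - exists x; split; auto. intros y Hy Py; apply Hn; eauto. Qed.

Lemma nat_least (P : nat -> Prop) : (exists n, P n) -> exists n, P n /\ forall m, m < n -> ~ P m.
Proof. intros H. exact (wf_min _ lt P lt_wf H). Qed.

Lemma imm_pred_unique R c c' b : well_order R -> imm_pred R c b -> imm_pred R c' b -> c = c'.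
Proof. intros [Hirr [Htr [Htot _]]] [H1 H1'] [H2 H2'].
 destruct (Htot c c') as [H|[H|H]]; auto.
 - exfalso; apply H1'; eauto.
 - exfalso; apply H2'; eauto. Qed.

Lemma parity_unique R b p q : well_order R -> parity R b p -> parity R b q -> p = q.
Proof. intros HW H1. revert q. induction H1 as [b Hl | b c p Hc Hp IH]; intros q H2.
 - inversion H2 as [b' Hl' E1 E2 | b' c' q' Hc' Hq' E1 E2]; subst; auto.
   exfalso; eapply Hl; eauto.
 - inversion H2 as [b' Hl' E1 E2 | b' c' q' Hc' Hq' E1 E2]; subst.
   + exfalso; eapply Hl'; eauto.
   + rewrite (imm_pred_unique _ _ _ _ HW Hc Hc') in IH. rewrite (IH _ Hq'); auto. Qed.

Lemma parity_total R b : well_order R -> exists p, parity R b p.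
Proof. intros HW. destruct HW as [_ [_ [_ Hwf]]]. induction (Hwf b) as [b _ IH].
 destruct (classic (exists c, imm_pred R c b)) as [[c Hc]|Hn].
 - destruct (IH c (proj1 Hc)) as [p Hp]. exists (negb p); econstructor; eauto.
 - exists false; apply parity_lim; intros c Hc; apply Hn; eauto. Qed.

Lemma min_unique R (P : nat -> Prop) b b' : well_order R -> P b -> (forall c, R c b -> ~ P c) -> P b' -> (forall c, R c b' -> ~ P c) -> b = b'.
Proof. intros [_ [_ [Htot _]]] H1 H2 H3 H4. destruct (Htot b b') as [H|[H|H]]; auto.
 exfalso; eapply H4; eauto. exfalso; eapply H2; eauto. Qed.

Lemma dir1 (E : Type) (T : topology E) (X : set E) : in_some_D T X -> Delta02 T X.
Proof.
 intros [R [a [A [HW [HA HX]]]]].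
 pose proof HW as [Hirr [Htr [Htot Hwf]]].
 assert (HV : forall n, is_open T (fun x => exists c, R c n /\ R c a /\ A c x)).
 { intros n. eapply open_ext. apply (open_union T (fun U => exists c, R c n /\ R c a /\ U = A c)).
   intros U [c [_ [Hc ->]]]; auto.
   intros x; split. intros [U [[c [H1 [H2 ->]]] Hx]]; eauto.
   intros [c [H1 [H2 Hx]]]. exists (A c); split; eauto. }
 split.
 - exists (fun n x => R n a /\ ~ same_parity R n a /\ A n x), (fun n x => exists c, R c n /\ R c a /\ A c x).
   split. intros n. destruct (classic (R n a /\ ~ same_parity R n a)) as [Hc|Hc].
   eapply open_ext. apply (open_cond (R n a /\ ~ same_parity R n a) (HA n (proj1 Hc))). intros; tauto.
   eapply open_ext. apply open_empty. intros; tauto.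
   split; auto.
   intros x; rewrite HX; split.
   + intros [b [H1 [H2 [H3 H4]]]]. exists b; split; auto. intros [c [Hc1 [Hc2 Hc3]]]; eapply H4; eauto.
   + intros [b [[H1 [H2 H3]] H4]]. exists b; repeat split; auto. intros c Hc Hcx; apply H4; eauto.
 - unfold Pi02.
   exists (fun n => match n with O => (fun _ => True) | S k => (fun x => R k a /\ same_parity R k a /\ A k x) end),
          (fun n => match n with O => (fun x => exists c, R c a /\ A c x) | S k => (fun x => exists c, R c k /\ R c a /\ A c x) end).
   split. intros [|n]. apply open_full. destruct (classic (R n a /\ same_parity R n a)) as [Hc|Hc].
   eapply open_ext. apply (open_cond (R n a /\ same_parity R n a) (HA n (proj1 Hc))). intros; tauto.
   eapply open_ext. apply open_empty. intros; tauto.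
   split. intros [|n]; auto. eapply open_ext. apply (open_union T (fun U => exists c, R c a /\ U = A c)).
   intros U [c [Hc ->]]; auto.
   intros x; split. intros [U [[c [H2 ->]] Hx]]; eauto.
   intros [c [H2 Hx]]. exists (A c); split; eauto.
   intros x; rewrite HX; split.
   + intros Hn. destruct (classic (exists c, R c a /\ A c x)) as [Hc|Hc].
     * destruct (wf_min _ R _ Hwf Hc) as [c [[Hc1 Hc2] Hm]].
       destruct (classic (same_parity R c a)) as [Hs|Hs].
       -- exists (S c); repeat split; auto. intros [d [Hd1 [Hd2 Hd3]]]. eapply Hm; eauto.
       -- exfalso; apply Hn. exists c; repeat split; auto. intros d Hd Hdx. eapply Hm; eauto.
     * exists 0; split; auto.
   + intros [[|c] [Hc1 Hc2]] [b [H1 [H2 [H3 H4]]]].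
     * apply Hc2; eauto.
     * destruct Hc1 as [Hc1 [Hc3 Hc4]]. destruct (Htot b c) as [H|[H|H]].
       -- apply Hc2; eauto.
       -- subst; tauto.
       -- eapply H4; eauto.
Qed.

Section Main.
Variables (E : Type) (T : topology E) (B : nat -> set E) (X : set E).
Hypothesis HBo : forall n, is_open T (B n).
Hypothesis HBb : forall U, is_open T U -> forall x, U x -> exists n, B n x /\ (forall y, B n y -> U y).
Hypothesis HXs : Sigma02 T X.
Hypothesis HXp : Pi02 T X.
Hypothesis Hbaire : baire_closed_Pi02 T.

Definition cl (S : set E) : set E := fun x => forall U, is_open T U -> U x -> exists y, S y /\ U y.
Definition Dv (F : set E) : set E := fun x => F x /\ cl (fun y => F y /\ X y) x /\ cl (fun y => F y /\ ~ X y) x.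

Inductive stage : set E -> Prop :=
| st_D : forall F, stage F -> stage (Dv F)
| st_I : forall Fam : set E -> Prop, (forall G, Fam G -> stage G) -> stage (fun x => forall G, Fam G -> G x).

Definition sub (F G : set E) := forall x, F x -> G x.
Definition psub (F G : set E) := sub F G /\ ~ sub G F.

Lemma sub_eq F G : sub F G -> sub G F -> F = G.
Proof. intros; apply set_ext; split; auto. Qed.

Lemma Dv_sub F : sub (Dv F) F.
Proof. intros x [H _]; auto. Qed.

Lemma cl_closed S : is_closed T (cl S).
Proof. unfold is_closed. eapply open_ext.
 apply (open_union T (fun U => is_open T U /\ forall y, S y -> ~ U y)). intros U [H _]; auto.
 intros x; split.
 - intros [U [[HU HS] Hx]] Hc. destruct (Hc U HU Hx) as [y [Hy1 Hy2]]. eapply HS; eauto.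
 - intros Hn. apply NNPP; intro Hc; apply Hn; intros U HU HUx; apply NNPP; intro Hno; apply Hc.
   exists U; split; [split; [exact HU| intros y Sy Uy; apply Hno; eauto] | exact HUx]. Qed.

Lemma closed_and F G : is_closed T F -> is_closed T G -> is_closed T (fun x => F x /\ G x).
Proof. unfold is_closed; intros HF HG. eapply open_ext. apply (open_or HF HG). intros x; tauto. Qed.

Lemma Dv_closed F : is_closed T F -> is_closed T (Dv F).
Proof. intros HF. unfold Dv. apply closed_and; auto. apply closed_and; apply cl_closed. Qed.

Lemma stage_closed F : stage F -> is_closed T F.
Proof. induction 1 as [F _ IH | Fam _ IH].
 - apply Dv_closed; auto.
 - unfold is_closed. eapply open_ext.
   apply (open_union T (fun W => exists G, Fam G /\ W = (fun x => ~ G x))).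
   intros W [G [HG ->]]. apply IH; auto.
   intros x; split.
   + intros [W [[G [HG ->]] Hx]] Hc. apply Hx, Hc; auto.
   + intros Hn. apply NNPP; intro Hc; apply Hn; intros G HG. apply NNPP; intro Hg; apply Hc.
     exists (fun x => ~ G x); split; eauto. Qed.

Definition ext_ c := forall x, stage x -> psub c x -> sub c (Dv x).
Definition Mc c x := sub c x \/ sub x (Dv c).

Lemma Mc_all c : stage c -> ext_ c -> forall x, stage x -> Mc c x.
Proof. intros Hc He x Hx. induction Hx as [F HF IH | Fam HFam IH].
 - destruct IH as [H|H].
   + destruct (classic (sub F c)) as [H'|H'].
     * rewrite (sub_eq _ _ H' H). right; intros y Hy; auto.
     * left. apply He; auto. split; auto.
   + right. intros y Hy. apply H, Dv_sub; auto.
 - destruct (classic (forall G, Fam G -> sub c G)) as [H|H].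
   + left. intros y Hy G HG. apply H; auto.
   + right. apply not_all_ex_not in H. destruct H as [G HG].
     apply imply_to_and in HG. destruct HG as [HG HnG].
     destruct (IH G HG) as [H|H]; [contradiction|].
     intros y Hy. apply H, Hy; auto. Qed.

Lemma ext_all c : stage c -> ext_ c.
Proof. intros Hc. induction Hc as [F HF IH | Fam HFam IH].
 - intros x Hx [H1 H2]. destruct (Mc_all F HF IH x Hx) as [H|H].
   + destruct (classic (sub x F)) as [H'|H'].
     * rewrite (sub_eq _ _ H' H). intros y Hy; auto.
     * intros y Hy. apply (IH x Hx); [split; auto | apply Dv_sub; auto].
   + exfalso. apply H2. intros y Hy; apply H; auto.
 - intros x Hx [H1 H2].
   assert (HM : forall G, Fam G -> Mc G x) by (intros G HG; apply Mc_all; auto).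
   destruct (classic (forall G, Fam G -> sub x (Dv G))) as [H|H].
   + exfalso; apply H2. intros y Hy G HG. apply Dv_sub, (H G HG); auto.
   + apply not_all_ex_not in H. destruct H as [G HG].
     apply imply_to_and in HG. destruct HG as [HG HnG].
     destruct (HM G HG) as [H|H]; [|contradiction].
     destruct (classic (sub x G)) as [H'|H'].
     * rewrite <- (sub_eq _ _ H H').
       destruct (Mc_all G (HFam G HG) (IH G HG) _ (st_I Fam HFam)) as [H3|H3]; auto.
       exfalso; apply H2. intros y Hy. apply H3, H', Hy.
     * intros y Hy. apply (IH G HG x Hx); [split; auto | apply Hy; auto]. Qed.

Lemma chain F G : stage F -> stage G -> sub F G \/ sub G F.
Proof. intros HF HG. destruct (Mc_all F HF (ext_all F HF) G HG) as [H|H]; auto.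
 right; intros y Hy; apply Dv_sub, H; auto. Qed.

Lemma psub_Dv F G : stage F -> stage G -> psub F G -> sub F (Dv G).
Proof. intros HF HG [H1 H2]. destruct (Mc_all G HG (ext_all G HG) F HF) as [H|H]; auto; contradiction. Qed.

Lemma fix_bottom G : stage G -> sub G (Dv G) -> forall F, stage F -> sub G F.
Proof. intros HG Hfix F HF. induction HF as [F HF IH | Fam HFam IH].
 - destruct (classic (sub F G)) as [H'|H'].
   + rewrite (sub_eq _ _ H' IH). auto.
   + apply (ext_all G HG F HF). split; auto.
 - intros y Hy H HH. apply IH; auto. Qed.

Lemma fix_empty G : stage G -> sub G (Dv G) -> forall x, ~ G x.
Proof. intros HG Hfix x Hx.
 pose proof (stage_closed G HG) as Hcl.
 assert (P1 : Pi02 T (fun y => G y /\ X y)).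
 { unfold Pi02. eapply Sigma02_ext. apply (Sigma02_or_open Hcl HXp). intros y; simpl; tauto. }
 assert (P2 : Pi02 T (fun y => G y /\ ~ X y)).
 { unfold Pi02. eapply Sigma02_ext. apply (Sigma02_or_open Hcl HXs). intros y; simpl.
   split. intros [H|H] [H1 H2]; auto. intros H. destruct (classic (G y)); [|auto]. right; apply NNPP; tauto. }
 set (A := fun n => match n with O => (fun y => G y /\ X y) | S _ => (fun y => G y /\ ~ X y) end).
 assert (Hd := Hbaire G Hcl A).
 destruct (Hd) with (U := fun _ : E => True) as [y [Hy _]].
 - intros [|n]; auto.
 - intros [|n] z Hz; apply Hz.
 - intros [|n] U HU [z [Hz HUz]]; destruct (Hfix z Hz) as [_ [H1 H2]]; simpl.
   + destruct (H1 U HU HUz) as [w Hw]; eauto.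
   + destruct (H2 U HU HUz) as [w Hw]; eauto.
 - apply open_full.
 - eauto.
 - destruct (Hy 0) as [_ H1]. destruct (Hy 1) as [_ H2]. auto. Qed.

Definition Rs G F := stage G /\ psub F G.

Lemma stage_acc F : stage F -> Acc Rs F.
Proof. induction 1 as [F HF IH | Fam HFam IH].
 - constructor. intros G [HG [H1 H2]].
   destruct (Mc_all F HF (ext_all F HF) G HG) as [H|H]; [|contradiction].
   destruct (classic (sub G F)) as [H'|H'].
   + rewrite (sub_eq _ _ H' H). auto.
   + apply (Acc_inv IH). split; auto. split; auto.
 - constructor. intros G [HG [H1 H2]].
   destruct (classic (forall H, Fam H -> sub G H)) as [Ha|Ha].
   + exfalso; apply H2. intros y Hy H HH. apply Ha; auto.
   + apply not_all_ex_not in Ha. destruct Ha as [H Ha].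
     apply imply_to_and in Ha. destruct Ha as [HH HnH].
     destruct (chain H G (HFam H HH) HG) as [Hs|Hs]; [|contradiction].
     apply (Acc_inv (IH H HH)). split; auto. split; auto. Qed.

Lemma below_Dv F : stage F -> forall x, (forall G, stage G -> psub F G -> Dv G x) -> F x.
Proof. induction 1 as [F HF IH | Fam HFam IH]; intros x Hx.
 - destruct (classic (sub F (Dv F))) as [H|H].
   + pose proof (sub_eq _ _ (Dv_sub F) H) as Heq. apply H. apply IH; auto.
     intros G HG HFG. apply Hx; auto. rewrite Heq; auto.
   + apply Hx; auto. split; [apply Dv_sub | auto].
 - intros H HH. destruct (classic (sub H (fun x => forall G, Fam G -> G x))) as [Hs|Hs].
   + apply IH; auto. intros G HG [H1 H2]. apply Hx; auto. split.
     * intros y Hy. apply H1. apply Hy; auto.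
     * intros Hc. apply H2. intros y Hy. apply (Hc y Hy H HH).
   + apply Dv_sub. apply Hx; auto. split; auto. intros y Hy; apply Hy; auto. Qed.

Definition stg n F := stage F /\ (exists y, B n y /\ F y) /\ (forall y, B n y -> ~ Dv F y).
Definition code n F := stg n F /\ forall m, m < n -> ~ stg m F.
Definition cd k F b := exists n, code n F /\ k = S (2*n + Nat.b2n b).

Lemma stg_inj n F G : stg n F -> stg n G -> F = G.
Proof. intros [HF [[y [Hy1 Hy2]] H3]] [HG [[z [Hz1 Hz2]] H4]].
 destruct (chain F G HF HG) as [H|H].
 - destruct (classic (sub G F)) as [H'|H']. apply sub_eq; auto.
   exfalso. apply (H4 y Hy1). apply (psub_Dv F G HF HG); auto. split; auto.
 - destruct (classic (sub F G)) as [H'|H']. apply sub_eq; auto.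
   exfalso. apply (H3 z Hz1). apply (psub_Dv G F HG HF); auto. split; auto. Qed.

Lemma code_fun n m F : code n F -> code m F -> n = m.
Proof. intros [H1 H2] [H3 H4]. destruct (Nat.lt_trichotomy n m) as [H|[H|H]]; auto.
 exfalso; eapply H4; eauto. exfalso; eapply H2; eauto. Qed.

Lemma cd_unique k F b G c : cd k F b -> cd k G c -> F = G /\ b = c.
Proof. intros [n [Hn ->]] [m [Hm Hk]].
 assert (n = m /\ b = c) as [-> ->] by (destruct b, c; simpl in Hk; split; try reflexivity; lia).
 split; auto. apply (stg_inj m); [apply Hn | apply Hm]. Qed.

Lemma cd_inj k l F b : cd k F b -> cd l F b -> k = l.
Proof. intros [n [Hn ->]] [m [Hm ->]]. rewrite (code_fun n m F Hn Hm). auto. Qed.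

Lemma cd_stage k F b : cd k F b -> stage F.
Proof. intros [n [[[H _] _] _]]; auto. Qed.

Lemma cd_0 F b : ~ cd 0 F b.
Proof. intros [n [_ H]]. discriminate. Qed.

Lemma code_exists F : stage F -> (exists x, F x /\ ~ Dv F x) -> exists n, code n F.
Proof. intros HF [x [Hx1 Hx2]].
 destruct (HBb _ (Dv_closed F (stage_closed F HF)) x Hx2) as [n [Hn1 Hn2]].
 destruct (nat_least (fun n => stg n F)) as [m [Hm1 Hm2]].
 - exists n. split; auto. split; eauto.
 - exists m; split; auto. Qed.

Lemma nonfinal G F : stage G -> stage F -> psub F G -> exists x, G x /\ ~ Dv G x.
Proof. intros HG HF [H1 H2]. apply NNPP; intro Hc. apply H2.
 apply (fix_bottom G HG); auto. intros y Hy. apply NNPP; intro Hd; apply Hc; eauto. Qed.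


Definition iscd k := exists F b, cd k F b.
Local Hint Unfold iscd : core.
Definition keylt (F : set E) (b : bool) G c := psub G F \/ (F = G /\ b = false /\ c = true).
Definition R k l :=
 (exists F b G c, cd k F b /\ cd l G c /\ keylt F b G c)
 \/ (iscd k /\ ~ iscd l)
 \/ (~ iscd k /\ ~ iscd l /\ ((k = 0 /\ l <> 0) \/ (k <> 0 /\ k < l))).

Lemma R_codes k l F b G c : cd k F b -> cd l G c -> keylt F b G c -> R k l.
Proof. intros; left; exists F, b, G, c; auto. Qed.

Lemma R_code_inv k l G c : R k l -> cd l G c -> exists F b, cd k F b /\ keylt F b G c.
Proof. intros [[F [b [G' [c' [H1 [H2 H3]]]]]]|[[H1 H2]|[H1 [H2 H3]]]] Hl.
 - destruct (cd_unique _ _ _ _ _ H2 Hl) as [E1 E2]; subst. exists F, b; split; auto.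
 - exfalso; apply H2; eauto.
 - exfalso; apply H2; eauto. Qed.

Lemma R_from_code k l F b : R k l -> cd k F b -> (exists G c, cd l G c /\ keylt F b G c) \/ ~ iscd l.
Proof. intros [[F' [b' [G [c [H1 [H2 H3]]]]]]|[[H1 H2]|[H1 [H2 H3]]]] Hk.
 - destruct (cd_unique _ _ _ _ _ H1 Hk) as [E1 E2]; subst. left; exists G, c; split; auto.
 - auto.
 - exfalso; apply H1; eauto. Qed.

Lemma psub_irr F : ~ psub F F.
Proof. intros [_ H]; apply H; intros y; auto. Qed.

Lemma psub_trans F G H : psub F G -> psub G H -> psub F H.
Proof. intros [H1 H2] [H3 H4]. split. intros y Hy; auto. intros Hc; apply H4; intros y Hy; auto. Qed.

Lemma keylt_irr F b : ~ keylt F b F b.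
Proof. intros [H|[_ [H1 H2]]]. apply (psub_irr F H). congruence. Qed.

Lemma keylt_trans F b G c H d : keylt F b G c -> keylt G c H d -> keylt F b H d.
Proof. intros [H1|[-> [-> ->]]] [H2|[-> [H3 ->]]].
 - left; eapply psub_trans; eauto.
 - left; auto.
 - left; auto.
 - discriminate. Qed.

Lemma code_acc F : Acc Rs F -> forall k b, cd k F b -> Acc R k.
Proof. induction 1 as [F _ IH].
 assert (Hf : forall k, cd k F false -> Acc R k).
 { intros k Hk. constructor. intros y Hy. destruct (R_code_inv _ _ _ _ Hy Hk) as [G [c [Hy' [Hp|[_ [_ Hc]]]]]].
   - apply (IH G) with (b := c); [split; [eapply cd_stage; eauto | auto] | auto].
   - discriminate. }
 intros k [|] Hk; auto. constructor. intros y Hy. destruct (R_code_inv _ _ _ _ Hy Hk) as [G [c [Hy' [Hp|[<- [-> _]]]]]].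
 - apply (IH G) with (b := c); [split; [eapply cd_stage; eauto | auto] | auto].
 - auto. Qed.

Lemma R_wo : well_order R.
Proof.
 split; [|split; [|split]].
 - intros k [[F [b [G [c [H1 [H2 H3]]]]]]|[[H1 H2]|[H1 [H2 H3]]]].
   + destruct (cd_unique _ _ _ _ _ H1 H2) as [<- <-]. apply (keylt_irr F b); auto.
   + auto.
   + lia.
 - intros x y z Hxy Hyz.
   destruct (classic (iscd x)) as [[F [b Hx]]|Hx].
   + destruct (R_from_code _ _ _ _ Hxy Hx) as [[G [c [Hy Hk1]]]|Hy].
     * destruct (R_from_code _ _ _ _ Hyz Hy) as [[H [d [Hz Hk2]]]|Hz].
       -- eapply R_codes; eauto. eapply keylt_trans; eauto.
       -- right; left; split; eauto.
     * destruct Hyz as [[F' [b' [G' [c' [H1 [H2 H3]]]]]]|[[H1 H2]|[H1 [H2 H3]]]].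
       -- exfalso; apply Hy; eauto.
       -- contradiction.
       -- right; left; split; eauto.
   + destruct Hxy as [[F' [b' [G' [c' [H1 [H2 H3]]]]]]|[[H1 H2]|[H1 [H2 H3]]]].
     * exfalso; apply Hx; eauto.
     * contradiction.
     * destruct Hyz as [[F'' [b'' [G'' [c'' [H4 [H5 H6]]]]]]|[[H4 H5]|[H4 [H5 H6]]]].
       -- exfalso; apply H2; eauto.
       -- contradiction.
       -- right; right; repeat split; auto. lia.
 - intros x y.
   destruct (classic (iscd x)) as [[F [b Hx]]|Hx]; destruct (classic (iscd y)) as [[G [c Hy]]|Hy].
   + destruct (chain F G (cd_stage _ _ _ Hx) (cd_stage _ _ _ Hy)) as [H|H].
     * destruct (classic (sub G F)) as [H'|H'].
       -- pose proof (sub_eq _ _ H H') as <-.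
          destruct b, c.
          ++ right; left; eapply cd_inj; eauto.
          ++ right; right; eapply R_codes; eauto. right; auto.
          ++ left; eapply R_codes; eauto. right; auto.
          ++ right; left; eapply cd_inj; eauto.
       -- right; right. eapply R_codes; eauto. left; split; auto.
     * destruct (classic (sub F G)) as [H'|H'].
       -- pose proof (sub_eq _ _ H H') as <-.
          destruct b, c.
          ++ right; left; eapply cd_inj; eauto.
          ++ right; right; eapply R_codes; eauto. right; auto.
          ++ left; eapply R_codes; eauto. right; auto.
          ++ right; left; eapply cd_inj; eauto.
       -- left. eapply R_codes; eauto. left; split; auto.
   + left; right; left; split; eauto.
   + right; right; right; left; split; eauto.
   + destruct (Nat.lt_trichotomy x y) as [H|[H|H]].
     * left. right; right; repeat split; auto. destruct (Nat.eq_dec x 0); [left|right]; lia.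
     * right; left; auto.
     * right; right. right; right; repeat split; auto. destruct (Nat.eq_dec y 0); [left|right]; lia.
 - intros l. induction l as [l IH] using (well_founded_induction lt_wf).
   destruct (classic (iscd l)) as [[F [b Hl]]|Hl].
   + eapply code_acc; eauto. apply stage_acc. eapply cd_stage; eauto.
   + constructor. intros y Hy.
     destruct Hy as [[F' [b' [G' [c' [H1 [H2 H3]]]]]]|[[[G [c H1]] H2]|[H1 [H2 H3]]]].
     * exfalso; apply Hl; eauto.
     * eapply code_acc; eauto. apply stage_acc. eapply cd_stage; eauto.
     * apply IH. lia.
Qed.

Lemma cd_mk n F b : code n F -> cd (S (2*n + Nat.b2n b)) F b.
Proof. intros H; exists n; auto. Qed.

Lemma cd_switch k F b c : cd k F b -> exists k', cd k' F c.
Proof. intros [n [Hn _]]. eexists; apply cd_mk; eauto. Qed.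

Lemma parity_codes F : Acc Rs F -> (forall k, cd k F false -> parity R k false) /\ (forall k, cd k F true -> parity R k true).
Proof. induction 1 as [F HAcc IH].
 assert (Hf : forall k, cd k F false -> parity R k false).
 { intros k Hk. destruct (classic (exists c, imm_pred R c k)) as [[c Hc]|Hn].
   - destruct (R_code_inv _ _ _ _ (proj1 Hc) Hk) as [G [g [Hcg [Hp|[_ [_ Hf]]]]]]; [|discriminate].
     assert (HR : Rs G F) by (split; [eapply cd_stage; eauto | auto]).
     destruct g.
     + replace false with (negb true) by reflexivity. eapply parity_succ; eauto.
       apply (proj2 (IH G HR)); auto.
     + exfalso. destruct (cd_switch _ _ _ true Hcg) as [c' Hc'].
       apply (proj2 Hc). exists c'. split.
       * eapply R_codes; eauto. right; auto.
       * eapply R_codes; eauto. left; auto.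
   - apply parity_lim. intros c Hc; apply Hn; eauto. }
 split; auto.
 intros k Hk. destruct (cd_switch _ _ _ false Hk) as [k0 Hk0].
 replace true with (negb false) by reflexivity. apply parity_succ with k0; auto.
 split.
 - eapply R_codes; eauto. right; auto.
 - intros [d [H1 H2]]. destruct (R_code_inv _ _ _ _ H2 Hk) as [G [g [Hd Hk2]]].
   destruct (R_from_code _ _ _ _ H1 Hk0) as [[G' [g' [Hd' Hk1]]]|Hn]; [|apply Hn; eauto].
   destruct (cd_unique _ _ _ _ _ Hd Hd') as [E1 E2]. subst G' g'.
   destruct Hk1 as [Ha|[E3 [_ E4]]]; destruct Hk2 as [Hb|[E5 [E6 _]]].
   + apply (psub_irr F). eapply psub_trans; eauto.
   + subst. apply (psub_irr _ Ha).
   + subst. apply (psub_irr _ Hb).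
   + congruence. Qed.

Definition OX F x := exists n, B n x /\ (forall y, B n y -> ~ Dv F y) /\ (forall y, B n y -> F y -> X y).
Definition ON F x := exists n, B n x /\ (forall y, B n y -> ~ Dv F y) /\ (forall y, B n y -> F y -> ~ X y).

Lemma OX_open F : is_open T (OX F).
Proof. eapply open_ext.
 apply (open_union T (fun W => exists n, W = B n /\ (forall y, B n y -> ~ Dv F y) /\ (forall y, B n y -> F y -> X y))).
 intros W [n [-> _]]; auto.
 intros x; split.
 - intros [W [[n [-> [H1 H2]]] Hx]]. exists n; auto.
 - intros [n [Hx [H1 H2]]]. exists (B n); split; eauto. Qed.

Lemma ON_open F : is_open T (ON F).
Proof. eapply open_ext.
 apply (open_union T (fun W => exists n, W = B n /\ (forall y, B n y -> ~ Dv F y) /\ (forall y, B n y -> F y -> ~ X y))).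
 intros W [n [-> _]]; auto.
 intros x; split.
 - intros [W [[n [-> [H1 H2]]] Hx]]. exists n; auto.
 - intros [n [Hx [H1 H2]]]. exists (B n); split; eauto. Qed.

Definition Apiece (p0 : bool) F (b : bool) : set E :=
  fun x => if b then ~ Dv F x else (~ F x \/ (if p0 then OX F x else ON F x)).

Definition Aset p0 k : set E := fun x => exists F b, cd k F b /\ Apiece p0 F b x.

Lemma Aset_iff p0 k F b x : cd k F b -> (Aset p0 k x <-> Apiece p0 F b x).
Proof. intros Hk; split.
 - intros [G [c [Hk' H]]]. destruct (cd_unique _ _ _ _ _ Hk Hk') as [-> ->]; auto.
 - intros H; exists F, b; auto. Qed.

Lemma Apiece_open p0 F b : stage F -> is_open T (Apiece p0 F b).
Proof. intros HF. pose proof (stage_closed F HF) as H1. pose proof (Dv_closed F H1) as H2.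
 unfold Apiece; destruct b; auto. destruct p0; apply open_or; auto using OX_open, ON_open. Qed.

Lemma R_cd0 k F b : cd k F b -> R k 0.
Proof. intros H. right; left; split; eauto. intros [G [c Hc]]; eapply cd_0; eauto. Qed.

Lemma R0_cd k : R k 0 -> iscd k.
Proof. intros [[F [b [G [c [H1 [H2 H3]]]]]]|[[H1 H2]|[H1 [H2 H3]]]].
 - exfalso; eapply cd_0; eauto.
 - auto.
 - lia. Qed.

Lemma piece_below p0 k F x : cd k F false -> F x -> forall c, R c k -> ~ Aset p0 c x.
Proof. intros Hk Hx c Hc [G [g [Hcg HA]]].
 destruct (R_code_inv _ _ _ _ Hc Hk) as [G' [g' [Hcg' [Hp|[_ [_ Hf]]]]]]; [|discriminate].
 destruct (cd_unique _ _ _ _ _ Hcg Hcg') as [<- <-].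
 assert (HD : Dv G x) by (apply (psub_Dv F G); auto; eapply cd_stage; eauto).
 unfold Apiece in HA. destruct g.
 - auto.
 - destruct HA as [HA|HA]. apply HA, Dv_sub, HD.
   destruct p0; destruct HA as [n [Hn [Hn2 _]]]; eapply Hn2; eauto. Qed.

Theorem dir2 : in_some_D T X.
Proof.
 pose proof R_wo as HW.
 destruct (parity_total R 0 HW) as [p0 Hp0].
 exists R, 0, (Aset p0). split; [auto|split].
 - intros k Hk. destruct (R0_cd k Hk) as [F [b Hkb]].
   eapply open_ext. apply (Apiece_open p0 F b (cd_stage _ _ _ Hkb)).
   intros x; symmetry; apply Aset_iff; auto.
 - intros x.
   set (Fx := fun y => forall G, (stage G /\ G x) -> G y).
   assert (HFs : stage Fx) by (apply st_I; intros G [HG _]; auto).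
   assert (HFx : Fx x) by (intros G [_ HG]; auto).
   assert (HnD : ~ Dv Fx x).
   { intros HD. apply (fix_empty Fx HFs) with x; auto.
     intros y Hy. apply Hy. split; auto. apply st_D; auto. }
   destruct (code_exists Fx HFs) as [n Hn]; [eauto|].
   pose proof (cd_mk n Fx false Hn) as Hk1. pose proof (cd_mk n Fx true Hn) as Hk2.
   set (k1 := S (2 * n + Nat.b2n false)) in *. set (k2 := S (2 * n + Nat.b2n true)) in *.
   destruct (parity_codes Fx (stage_acc Fx HFs)) as [Pf Pt].
   pose proof (Pf _ Hk1) as Hpk1. pose proof (Pt _ Hk2) as Hpk2.
   assert (Ha : forall c, R c k1 -> ~ Aset p0 c x) by (apply (piece_below p0 k1 Fx x); auto).
   assert (Hc : ~ Aset p0 k1 x -> forall c, R c k2 -> ~ Aset p0 c x).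
   { intros Hn1 c Hc. destruct (R_code_inv _ _ _ _ Hc Hk2) as [G [g [Hcg [Hp|[<- [-> _]]]]]].
     - apply Ha. eapply R_codes; eauto. left; auto.
     - rewrite (cd_inj _ _ _ _ Hcg Hk1). auto. }
   assert (HA2 : Aset p0 k2 x) by (apply (Aset_iff _ _ _ _ _ Hk2); simpl; auto).
   assert (HA1 : Aset p0 k1 x <-> (if p0 then OX Fx x else ON Fx x)).
   { rewrite (Aset_iff _ _ _ _ _ Hk1). unfold Apiece; simpl. split; [intros [H|H]; [contradiction|auto] | auto]. }
   assert (Hnot : forall k q, parity R k q -> q <> p0 -> ~ same_parity R k 0).
   { intros k q Hq Hne [r [Hr1 Hr2]]. apply Hne.
     rewrite (parity_unique _ _ _ _ HW Hq Hr1). apply (parity_unique _ _ _ _ HW Hr2 Hp0). }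
   assert (Hsame : forall k, parity R k p0 -> same_parity R k 0) by (intros k Hk; exists p0; auto).
   assert (HXO : X x -> OX Fx x /\ ~ ON Fx x).
   { intros HX. split.
     - assert (Hcl : ~ cl (fun y => Fx y /\ ~ X y) x).
       { intros Hcl. apply HnD. split; auto. split; auto. intros U HU HUx; exists x; auto. }
       unfold cl in Hcl. apply not_all_ex_not in Hcl. destruct Hcl as [U Hcl].
       apply imply_to_and in Hcl. destruct Hcl as [HU Hcl]. apply imply_to_and in Hcl. destruct Hcl as [HUx Hcl].
       destruct (HBb U HU x HUx) as [m [Hm1 Hm2]].
       exists m. split; auto. split.
       + intros y Hy [_ [_ Hy3]]. destruct (Hy3 (B m) (HBo m) Hy) as [z [[Hz1 Hz2] Hz3]].
         apply Hcl. exists z; auto.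
       + intros y Hy HFy. apply NNPP; intro HnX. apply Hcl. exists y; auto.
     - intros [m [Hm1 [_ Hm3]]]. apply (Hm3 x); auto. }
   assert (HNO : ~ X x -> ON Fx x /\ ~ OX Fx x).
   { intros HX. split.
     - assert (Hcl : ~ cl (fun y => Fx y /\ X y) x).
       { intros Hcl. apply HnD. split; auto. split; auto. intros U HU HUx; exists x; auto. }
       unfold cl in Hcl. apply not_all_ex_not in Hcl. destruct Hcl as [U Hcl].
       apply imply_to_and in Hcl. destruct Hcl as [HU Hcl]. apply imply_to_and in Hcl. destruct Hcl as [HUx Hcl].
       destruct (HBb U HU x HUx) as [m [Hm1 Hm2]].
       exists m. split; auto. split.
       + intros y Hy [_ [Hy2 _]]. destruct (Hy2 (B m) (HBo m) Hy) as [z [[Hz1 Hz2] Hz3]].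
         apply Hcl. exists z; auto.
       + intros y Hy HFy HXy. apply Hcl. exists y; auto.
     - intros [m [Hm1 [_ Hm3]]]. apply HX, (Hm3 x); auto. }
   split.
   + intros HX. destruct (HXO HX) as [H1 H2]. destruct p0.
     * exists k1. split; [eapply R_cd0; eauto|]. split; [eapply Hnot; eauto; discriminate|].
       split; auto. apply HA1; auto.
     * assert (Hn1 : ~ Aset false k1 x) by (rewrite HA1; auto).
       exists k2. split; [eapply R_cd0; eauto|]. split; [eapply Hnot; eauto; discriminate|].
       split; auto.
   + intros [b [Hb1 [Hb2 [Hb3 Hb4]]]]. apply NNPP; intro HX. destruct (HNO HX) as [H1 H2]. destruct p0.
     * assert (Hn1 : ~ Aset true k1 x) by (rewrite HA1; auto).
       assert (b = k2) as -> by (eapply (min_unique R (fun c => Aset true c x)); eauto).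
       apply Hb2, Hsame; auto.
     * assert (b = k1) as -> by (eapply (min_unique R (fun c => Aset false c x)); eauto; apply HA1; auto).
       apply Hb2, Hsame; auto.
Qed.

End Main.

Theorem theorem3p15 (E : Type) (T : topology E) :
  second_countable T -> baire_closed_Pi02 T ->
  forall X : set E, in_some_D T X <-> Delta02 T X.
Proof.
  intros [B [HBo HBb]] Hb X. split.
  - apply dir1.
  - intros [HXs HXp]. exact (dir2 E T B X HBo HBb HXs HXp Hb).
Qed.
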